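(* Let $\mathcal{I}$ be an instance of the Square Strip Packing Problem, consider the bottom-left packing for an ordering attaining $h_{\text{BL}}^{\text{worst}}(\mathcal{I})$, let $h_{\text{BL}}$ be its height, and let $g\ge 0$ be a constant and $f$ the number such that the unoccupied space of this packing within the substrip $[0,W]\times[0,h_{\text{BL}}-g\,h_{\text{max}}]$ can be covered by $f$ copies of the squares of the instance (a union of translates in which each square of $\mathcal{I}$ is used at most $f$ times). Then $$\frac{h_{\text{BL}}^{\text{worst}}(\mathcal{I})}{h_{\text{OPT}}(\mathcal{I})}\ \le\ f+g+1 .$$
   Context: Square Strip Packing Problem: squares with side lengths at most $W$ are to be packed without rotation into the strip $[0,W]\times[0,\infty)$ with pairwise disjoint interiors; the height of a packing is the maximum top coordinate of a square, and $h_{\text{OPT}}(\mathcal{I})$ is the minimum height of a feasible packing. Bottom-left algorithm: given an ordering, place the first square at $(0,0)$ and each subsequent square at a feasible position $(x,y)$ (lower-left corner) with $(y,x)$ lexicographically minimal. $h_{\text{BL}}^{\text{worst}}(\mathcal{I})$ is the maximum over all orderings of the height of the bottom-left packing. $h_{\text{max}}$ is the largest side length of a square in $\mathcal{I}$. *)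

(* Defs.v *)
From HB Require Import structures.
From mathcomp Require Import all_boot all_order all_algebra all_fingroup.
From mathcomp Require Import classical_sets boolp reals.
Set Implicit Arguments. Unset Strict Implicit. Unset Printing Implicit Defensive.
Import Order.TTheory GRing.Theory Num.Theory.
Local Open Scope ring_scope.
Local Open Scope classical_set_scope.

Section SquarePacking.
Variable R : realType.

Definition pt2 := (R * R)%type.

Definition sq_closed (p : pt2) (s : R) : set pt2 :=
  [set q | p.1 <= q.1 <= p.1 + s /\ p.2 <= q.2 <= p.2 + s].

Definition sq_open (p : pt2) (s : R) : set pt2 :=
  [set q | p.1 < q.1 < p.1 + s /\ p.2 < q.2 < p.2 + s].

Definition instance (W : R) (n : nat) (s : 'I_n -> R) : Prop :=
  0 < W /\ forall i, 0 < s i <= W.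

Definition in_strip (W : R) (si : R) (p : pt2) : Prop :=
  0 <= p.1 /\ p.1 + si <= W /\ 0 <= p.2.

Definition feasible (W : R) (n : nat) (s : 'I_n -> R) (pos : 'I_n -> pt2)
  : Prop :=
  (forall i, in_strip W (s i) (pos i)) /\
  (forall i j, i != j -> sq_open (pos i) (s i) `&` sq_open (pos j) (s j) = set0).

Definition height (n : nat) (s : 'I_n -> R) (pos : 'I_n -> pt2) : R :=
  \big[Num.max/0]_(i < n) ((pos i).2 + s i).

Definition h_OPT (W : R) (n : nat) (s : 'I_n -> R) : R :=
  inf [set height s pos | pos in [set pos | feasible W s pos]].

Definition h_max (n : nat) (s : 'I_n -> R) : R := \big[Num.max/0]_(i < n) s i.

Definition feasible_pos (W : R) (n : nat) (s : 'I_n -> R)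
  (pos : 'I_n -> pt2) (placed : pred 'I_n) (i : 'I_n) (p : pt2) : Prop :=
  in_strip W (s i) p /\
  (forall j, placed j -> sq_open p (s i) `&` sq_open (pos j) (s j) = set0).

Definition lex_yx (p q : pt2) : Prop :=
  p.2 < q.2 \/ (p.2 = q.2 /\ p.1 <= q.1).

Definition BL_packing (W : R) (n : nat) (s : 'I_n -> R) (sigma : {perm 'I_n})
  (pos : 'I_n -> pt2) : Prop :=
  forall k : 'I_n,
    let placed := [pred i : 'I_n | [exists j : 'I_n, (j < k)%N && (sigma j == i)]] in
    feasible_pos W s pos placed (sigma k) (pos (sigma k)) /\
    forall p, feasible_pos W s pos placed (sigma k) p -> lex_yx (pos (sigma k)) p.

(* The unoccupied space of the packing pos within [0,W] x [0,H] is covered by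
   f copies of the squares: for every square i there are f translates
   t i c (c < f), and every pt2 of [0,W] x [0,H] not in a packed square lies
   in one of these translates. *)
Definition covered_by_copies (W : R) (n : nat) (s : 'I_n -> R)
  (pos : 'I_n -> pt2) (H : R) (f : nat) : Prop :=
  exists t : 'I_n -> 'I_f -> pt2,
    forall q : pt2,
      0 <= q.1 <= W -> 0 <= q.2 <= H ->
      (forall i, ~ sq_closed (pos i) (s i) q) ->
      exists i c, sq_closed (t i c) (s i) q.

End SquarePacking.

(* Main.v *)
Require Import Defs.
From HB Require Import structures.
From mathcomp Require Import all_boot all_order all_algebra all_fingroup.
From mathcomp Require Import classical_sets boolp reals.
From mathcomp Require Import lra.
From mathcomp Require Import ereal measure lebesgue_measure lebesgue_integral_fubini.
Import Order.TTheory GRing.Theory Num.Theory.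
Local Open Scope ring_scope.
Local Open Scope classical_set_scope.

Section S.
Variable R : realType.
Definition mu2 := ((@lebesgue_measure R) \x (@lebesgue_measure R))%E.


Lemma sqC (p : pt2 R) s : sq_closed p s = `[p.1, p.1+s] `*` `[p.2, p.2+s].
Proof.
apply/seteqP; split => q /=; rewrite /sq_closed/= !in_itv/=.
  by move=> [-> ->]; split.
by move=> [] /andP[-> ->] /andP[-> ->].
Qed.

Lemma sqO (p : pt2 R) s : sq_open p s = `]p.1, p.1+s[ `*` `]p.2, p.2+s[.
Proof.
apply/seteqP; split => q /=; rewrite /sq_open/= !in_itv/=.
  by move=> [-> ->]; split.
by move=> [] /andP[-> ->] /andP[-> ->].
Qed.

Lemma sqC_meas (p : pt2 R) s : measurable (sq_closed p s).
Proof. rewrite sqC; apply: measurableX; exact: measurable_itv. Qed.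
Lemma sqO_meas (p : pt2 R) s : measurable (sq_open p s).
Proof. rewrite sqO; apply: measurableX; exact: measurable_itv. Qed.

Lemma mu_box (a b w h : R) : 0 <= w -> 0 <= h ->
  mu2 (`[a, a+w] `*` `[b, b+h]) = (w * h)%:E.
Proof.
move=> w0 h0; rewrite /mu2 product_measure1E; try exact: measurable_itv.
have h1 := @lebesgue_measure_itv R `[a, a+w]%R.
have h2 := @lebesgue_measure_itv R `[b, b+h]%R.
rewrite /= in h1 h2.
apply: (eq_trans (f_equal2 (fun a b => (a * b)%E) h1 h2)).
rewrite !lte_fin !ltrDl; case: ltP => hw; case: ltP => hh.
- by rewrite -!EFinD -EFinM !(addrC _ (- _)) !addKr.
- have -> : h = 0 by apply/eqP; rewrite eq_le hh h0.
  by rewrite mule0 mulr0.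
- have -> : w = 0 by apply/eqP; rewrite eq_le hw w0.
  by rewrite mul0e mul0r.
- have -> : w = 0 by apply/eqP; rewrite eq_le hw w0.
  by rewrite mul0e mul0r.
Qed.

Lemma mu_boxO (a b w h : R) : 0 <= w -> 0 <= h ->
  mu2 (`]a, a+w[ `*` `]b, b+h[) = (w * h)%:E.
Proof.
move=> w0 h0; rewrite /mu2 product_measure1E; try exact: measurable_itv.
have h1 := @lebesgue_measure_itv R `]a, a+w[%R.
have h2 := @lebesgue_measure_itv R `]b, b+h[%R.
rewrite /= in h1 h2.
apply: (eq_trans (f_equal2 (fun a b => (a * b)%E) h1 h2)).
rewrite !lte_fin !ltrDl; case: ltP => hw; case: ltP => hh.
- by rewrite -!EFinD -EFinM !(addrC _ (- _)) !addKr.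
- have -> : h = 0 by apply/eqP; rewrite eq_le hh h0.
  by rewrite mule0 mulr0.
- have -> : w = 0 by apply/eqP; rewrite eq_le hw w0.
  by rewrite mul0e mul0r.
- have -> : w = 0 by apply/eqP; rewrite eq_le hw w0.
  by rewrite mul0e mul0r.
Qed.

Lemma mu_sqC (p : pt2 R) s : 0 <= s -> mu2 (sq_closed p s) = (s * s)%:E.
Proof. by move=> s0; rewrite sqC mu_box. Qed.
Lemma mu_sqO (p : pt2 R) s : 0 <= s -> mu2 (sq_open p s) = (s * s)%:E.
Proof. by move=> s0; rewrite sqO mu_boxO. Qed.

Lemma boole_ord m (F : 'I_m -> set (R*R)) : (forall i, measurable (F i)) ->
  (mu2 (\big[setU/set0]_(i < m) F i) <= \sum_(i < m) mu2 (F i))%E.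
Proof.
move=> mF; pose A (k : nat) := oapp F set0 (insub k).
have FE (i : 'I_m) : F i = A i by rewrite /A valK.
rewrite (eq_bigr (fun i : 'I_m => A i)) //.
rewrite [X in (_ <= X)%E](eq_bigr (fun i : 'I_m => mu2 (A i))); last by move=> i _; rewrite FE.
apply: Boole_inequality => k _; rewrite /A; case: insubP => //= i _ _; exact: mF.
Qed.

Lemma in_bigsetU m (F : 'I_m -> set (R*R)) i q : F i q -> (\big[setU/set0]_(j < m) F j) q.
Proof. by move=> h; rewrite (bigD1 i) //=; left. Qed.
Arguments in_bigsetU [m F] i [q].

Lemma in_bigsetU_inv m (F : 'I_m -> set (R*R)) q : (\big[setU/set0]_(j < m) F j) q -> exists i, F i q.
Proof.
apply: (big_rec (fun S : set (R*R) => S q -> exists i, F i q)) => //.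
by move=> i S _ ih [h|h]; [exists i | exact: ih h].
Qed.

Lemma height_ge0 n (s : 'I_n -> R) pos : 0 <= height s pos.
Proof. by apply: (big_rec (fun x => 0 <= x)) => // i x _ hx; rewrite le_max hx orbT. Qed.

Lemma height_ge n (s : 'I_n -> R) pos i : (pos i).2 + s i <= height s pos.
Proof. by rewrite /height (bigD1 i) //= le_max lexx. Qed.

Lemma pack_area W n (s : 'I_n -> R) pos : instance W s -> feasible W s pos ->
  \sum_i s i * s i <= W * height s pos.
Proof.
move=> [W0 sW] [Hs Hd].
have Y0 := height_ge0 _ s pos.
have sub : \big[setU/set0]_(i < n) sq_open (pos i) (s i) `<=` `[0, 0 + W] `*` `[0, 0 + height s pos].
  move=> q /in_bigsetU_inv [i]; rewrite /sq_open /= !in_itv /=.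
  have := Hs i; have := height_ge _ s pos i; rewrite /in_strip.
  move=> hh [h1 [h2 h3]] [/andP[a1 a2] /andP[b1 b2]].
  rewrite !add0r; repeat (apply/andP; split); lra.
have mU : measurable (\big[setU/set0]_(i < n) sq_open (pos i) (s i)).
  by apply: bigsetU_measurable => i _; exact: sqO_meas.
have := le_measure mu2 _ _ sub; rewrite !inE => /(_ mU).
have mB : measurable (`[0, 0 + W] `*` `[0, 0 + height s pos] : set (R*R)).
  by apply: measurableX; exact: measurable_itv.
move=> /(_ mB) h.
have {h} : (mu2 (\big[setU/set0]_(i < n) sq_open (pos i) (s i)) <= (W * height s pos)%:E)%E.
  by rewrite -(mu_box 0 0 W (height s pos) (ltW W0) Y0).
have E : mu2 (\big[setU/set0]_(i < n) sq_open (pos i) (s i)) = (\sum_(i < n) mu2 (sq_open (pos i) (s i)))%E.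
  apply: (@measure_bigsetU_ord _ _ _ mu2 n xpredT (fun i => sq_open (pos i) (s i))).
  - by move=> i; exact: sqO_meas.
  move=> i j _ _ [q [hi hj]]; apply/eqP; apply: contraT => ne.
  have := Hd i j ne; move/seteqP => [+ _] => /(_ q (conj hi hj)).
  by [].
rewrite E (eq_bigr (fun i => (s i * s i)%:E)); last first.
  by move=> i _; rewrite mu_sqO //; have /andP[/ltW] := sW i.
by rewrite sumEFin lee_fin.
Qed.
Lemma cover_area W n (s : 'I_n -> R) pos H f : instance W s ->
  covered_by_copies W s pos H f -> 0 <= H ->
  W * H <= (f%:R + 1) * \sum_i s i * s i.
Proof.
move=> [W0 sW] [t ht] H0.
have s0 i : 0 <= s i by have /andP[/ltW] := sW i.
pose U i := sq_closed (pos i) (s i) `|` \big[setU/set0]_(c < f) sq_closed (t i c) (s i).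
have mUi i : measurable (U i).
  apply: measurableU; first exact: sqC_meas.
  by apply: bigsetU_measurable => c _; exact: sqC_meas.
have sub : `[0, 0 + W] `*` `[0, 0 + H] `<=` \big[setU/set0]_(i < n) U i.
  move=> q /=; rewrite !in_itv /= !add0r => -[q1 q2].
  have [[i hi]|nex] := pselect (exists i, sq_closed (pos i) (s i) q).
    by apply: (in_bigsetU i); left.
  have [i [c hc]] := ht q q1 q2 (fun i hi => nex (ex_intro _ i hi)).
  by apply: (in_bigsetU i); right; exact: (in_bigsetU c).
have mUU : measurable (\big[setU/set0]_(i < n) U i) by apply: bigsetU_measurable.
have mB : measurable (`[0, 0 + W] `*` `[0, 0 + H] : set (R*R)).
  by apply: measurableX; exact: measurable_itv.
have h1 := le_measure mu2.
move: h1 => /(_ _ _ _ _ sub); rewrite !inE => /(_ mB mUU) h1.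
have {h1} : ((W * H)%:E <= mu2 (\big[setU/set0]_(i < n) U i))%E.
  by rewrite -(mu_box 0 0 W H (ltW W0) H0).
move=> /le_trans /(_ (boole_ord _ U mUi)) h1.
have h3 i : (mu2 (U i) <= ((f%:R + 1) * (s i * s i))%:E)%E.
  have b := boole_ord _ (fun c => sq_closed (t i c) (s i)) (fun c => sqC_meas _ _).
  rewrite (eq_bigr (fun _ => (s i * s i)%:E)) in b; last by move=> c _; rewrite mu_sqC.
  rewrite sumEFin sumr_const card_ord in b.
  have hU : (mu2 (U i) <= mu2 (sq_closed (pos i) (s i)) + mu2 (\big[setU/set0]_(c < f) sq_closed (t i c) (s i)))%E.
    apply: measureU2; first exact: sqC_meas.
    by apply: bigsetU_measurable => c _; exact: sqC_meas.
  have e := mu_sqC (pos i) (s i) (s0 i).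
  have {}hU : (mu2 (U i) <= (s i * s i)%:E + mu2 (\big[setU/set0]_(c < f) sq_closed (t i c) (s i)))%E.
    by rewrite -e; exact: hU.
  apply: le_trans hU _; apply: le_trans (leeD (lexx _) b) _.
  by rewrite -EFinD lee_fin mulrDl mul1r mulr_natl addrC.
have h4 : (\sum_(i < n) mu2 (U i) <= \sum_(i < n) ((f%:R+1)*(s i*s i))%:E)%E.
  by apply: lee_sum => i _; exact: h3.
have := le_trans h1 h4.
by rewrite sumEFin lee_fin -mulr_sumr.
Qed.

Lemma hmax_ge0 n (s : 'I_n -> R) : 0 <= h_max s.
Proof. by apply: (big_rec (fun x => 0 <= x)) => // i x _ hx; rewrite le_max hx orbT. Qed.

Lemma hmax_le W n (s : 'I_n -> R) pos : feasible W s pos -> h_max s <= height s pos.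
Proof.
move=> [Hs _]; rewrite /h_max; apply: bigmax_le; first exact: height_ge0.
move=> i _; apply: le_trans (height_ge _ s pos i).
by have [_ [_ h]] := Hs i; rewrite lerDr.
Qed.

End S.
Arguments hmax_ge0 {R n}.
Arguments height_ge0 {R n}.
Arguments cover_area {R W n s pos H f}.
Arguments pack_area {R W n s pos}.
Arguments hmax_le {R W n s pos}.

Theorem theorem14 (R : realType) (W : R) (n : nat) (s : 'I_n -> R)
  (sigma : {perm 'I_n}) (pos : 'I_n -> pt2 R) (g : R) (f : nat) :
  instance W s ->
  BL_packing W s sigma pos ->
  (forall (sigma' : {perm 'I_n}) (pos' : 'I_n -> pt2 R),
      BL_packing W s sigma' pos' -> height s pos' <= height s pos) ->
  0 <= g ->
  covered_by_copies W s pos (height s pos - g * h_max s) f ->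
  height s pos / h_OPT W s <= f%:R + g + 1.
Proof.
move=> Hi _ _ g0 Hc.
have W0 : 0 < W by case: Hi.
set A := \sum_i s i * s i.
have A0 : 0 <= A by apply: sumr_ge0 => i _; apply: mulr_ge0; case: Hi => _ /(_ i) /andP[/ltW].
set h := height s pos.
set hm := h_max s.
have hm0 : 0 <= hm := hmax_ge0 s.
have F0 : 0 <= (f%:R : R) by [].
have h0 : 0 <= h := height_ge0 s pos.
have cov : W * (h - g * hm) <= (f%:R + 1) * A.
  have [H0|H0] := leP 0 (h - g * hm); first exact: (cover_area Hi Hc H0).
  apply: le_trans (_ : 0 <= _); last by apply: mulr_ge0 => //; lra.
  by apply/ltW; rewrite pmulr_rlt0.
rewrite /h_OPT.
set S := [set _ | _ in _].
have [[x Sx]|Se] := pselect (exists x, S x); last first.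
  have -> : S = set0 by apply/seteqP; split => // y Sy; apply: Se; exists y.
  by rewrite inf0 invr0 mulr0; lra.
have Sne : nonempty S by exists x.
have L1 : A / W <= inf S.
  apply: lb_le_inf => // _ [p Fp <-].
  by rewrite ler_pdivrMr // mulrC; exact: (pack_area Hi Fp).
have L2 : hm <= inf S.
  apply: lb_le_inf => // _ [p Fp <-]; exact: (hmax_le Fp).
set O := inf S in L1 L2 *.
have AO : A <= W * O by rewrite mulrC -ler_pdivrMr.
have HO : h - g * hm <= (f%:R + 1) * O.
  rewrite -(ler_pM2l W0); apply: le_trans cov _.
  rewrite mulrCA; apply: ler_wpM2l; [lra | exact: AO].
have [O0|O0] := eqVneq O 0.
  have -> : h / O = 0 by rewrite O0 invr0 mulr0.
  lra.
have Op : 0 < O by rewrite lt_def O0 /=; exact: le_trans hm0 L2.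
rewrite ler_pdivrMr //.
have : g * hm <= g * O by apply: ler_wpM2l.
lra.
Qed.
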